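(* Let $\Omega$ be a convex subset of $M_{n\times n}(\mathbb{C})$ and let $\Omega_s$ be the set of all nonsingular matrices in $\Omega$ that have $n$ distinct eigenvalues. If the closure $\overline{\Omega}$ contains at least one nonsingular matrix with $n$ distinct eigenvalues, then $\Omega_s$ is dense in $\Omega$.
   Context: $M_{n\times n}(\mathbb{C})$ denotes the set of $n\times n$ complex matrices, equipped with the topology induced by the Frobenius norm $\|A\|_F=(\sum_{i,j}|a_{ij}|^2)^{1/2}$. *)

(* Defs.v *)
From mathcomp Require Import all_boot all_order all_algebra.
From mathcomp Require Import reals.
From mathcomp.real_closed Require Export complex.
Set Implicit Arguments. Unset Strict Implicit. Unset Printing Implicit Defensive.
Import Order.TTheory GRing.Theory Num.Theory.
Local Open Scope ring_scope.
Local Open Scope complex_scope.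

Section Defs.
Variables (R : realType) (n : nat).
Local Notation M := 'M[R[i]]_n.

Definition frob_norm (A : M) : R :=
  Num.sqrt (\sum_(i < n) \sum_(j < n) (ComplexField.Normc.normc (A i j)) ^+ 2).

Definition convex_mx (Om : M -> Prop) : Prop :=
  forall A B : M, Om A -> Om B -> forall t : R, 0 <= t <= 1 ->
    Om (t%:C *: A + (1 - t)%:C *: B).

Definition closure_mx (Om : M -> Prop) : M -> Prop :=
  fun A => forall e : R, 0 < e -> exists B : M, Om B /\ frob_norm (A - B) < e.

Definition distinct_eigs (A : M) : Prop :=
  exists s : seq R[i], [/\ uniq s, size s = n & all (eigenvalue A) s].

Definition Omega_s (Om : M -> Prop) : M -> Prop :=
  fun A => [/\ Om A, A \in unitmx & distinct_eigs A].

Definition dense_in (S Om : M -> Prop) : Prop :=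
  forall A : M, Om A -> forall e : R, 0 < e ->
    exists B : M, S B /\ frob_norm (A - B) < e.
End Defs.

(* Main.v *)
Require Import Defs.
From mathcomp Require Import all_boot all_order all_algebra all_field all_fingroup.
From mathcomp Require Import reals.
From mathcomp.real_closed Require Import complex.
Import Order.TTheory GRing.Theory Num.Theory.
Local Open Scope ring_scope.
Local Open Scope complex_scope.
Set Implicit Arguments. Unset Strict Implicit.
Section Norm.
Variable R : realType.
Local Notation C := R[i].
Definition nrm (z : C) : R := ComplexField.Normc.normc z.
Lemma nrmE (z : C) : `|z| = (nrm z)%:C. Proof. by []. Qed.
Lemma nrm_ge0 z : 0 <= nrm z.
Proof. by rewrite -ler0c -nrmE. Qed.
Lemma nrmD x y : nrm (x + y) <= nrm x + nrm y.
Proof. by have := ler_normD x y; rewrite !nrmE -rmorphD lecR. Qed.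
Lemma nrmM x y : nrm (x * y) = nrm x * nrm y.
Proof. by apply: complexI; have := normrM x y; rewrite !nrmE -rmorphM. Qed.
Lemma nrmN x : nrm (- x) = nrm x.
Proof. by apply: complexI; rewrite -!nrmE normrN. Qed.
Lemma nrm0 : nrm 0 = 0.
Proof. by apply: complexI; rewrite -!nrmE normr0. Qed.
Lemma nrm_eq0 x : (nrm x == 0) = (x == 0).
Proof. by rewrite -(inj_eq (@complexI _)) -nrmE normr_eq0. Qed.
Lemma nrmB x y : nrm (x - y) = nrm (y - x).
Proof. by rewrite -nrmN opprB. Qed.
Lemma nrm_natmul x k : nrm (x *+ k) = nrm x * k%:R.
Proof. rewrite -[x *+ k]mulr_natr nrmM; congr (_ * _). apply: complexI. by rewrite -nrmE normr_nat rmorph_nat. Qed.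
Lemma nrm_real (c : R) : nrm c%:C = `|c|.
Proof. by rewrite /nrm /= expr0n /= addr0 sqrtr_sqr. Qed.
End Norm.
Section Frob.
Variables (R : realType) (k : nat).
Local Notation C := R[i].
Local Notation M := 'M[C]_k.

Lemma sum_ge_term (I : finType) (F : I -> R) (i : I) :
  (forall j, 0 <= F j) -> F i <= \sum_j F j.
Proof.
move=> F0; rewrite (bigD1 i) //= lerDl; exact: sumr_ge0.
Qed.

Lemma frob_ge0 (X : M) : 0 <= frob_norm X.
Proof. exact: sqrtr_ge0. Qed.

Lemma frob_entry (X : M) i j : nrm (X i j) <= frob_norm X.
Proof.
rewrite /frob_norm -[nrm _]ger0_norm ?nrm_ge0 // -sqrtr_sqr ler_sqrt; last first.
  by apply: sumr_ge0 => a _; apply: sumr_ge0 => b _; exact: sqr_ge0.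
apply: (le_trans _ (@sum_ge_term _ (fun a => \sum_(b < k) nrm (X a b) ^+ 2) i _)).
  apply: (le_trans _ (@sum_ge_term _ (fun b => nrm (X i b) ^+ 2) j _)) => //.
  by move=> b; exact: sqr_ge0.
by move=> a; apply: sumr_ge0 => b _; exact: sqr_ge0.
Qed.

Lemma frob_scale (c : R) (X : M) : 0 <= c -> frob_norm (c%:C *: X) = c * frob_norm X.
Proof.
move=> c0; rewrite /frob_norm.
have -> : \sum_(a < k) \sum_(b < k) ComplexField.Normc.normc ((c%:C *: X) a b) ^+ 2
   = c ^+ 2 * \sum_(a < k) \sum_(b < k) ComplexField.Normc.normc (X a b) ^+ 2.
  rewrite mulr_sumr; apply: eq_bigr => a _; rewrite mulr_sumr; apply: eq_bigr => b _.
  by rewrite mxE -[ComplexField.Normc.normc _]/(nrm _) nrmM nrm_real exprMn real_normK // num_real.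
by rewrite sqrtrM ?sqr_ge0 // sqrtr_sqr ger0_norm.
Qed.
End Frob.
Section Lip.
Variables (R : realType) (k : nat) (A0 : 'M[R[i]]_k).
Local Notation C := R[i].
Local Notation M := 'M[C]_k.
Local Notation fr B := (frob_norm (A0 - B)).

Definition lip (f : M -> C) := exists K : R, 0 <= K /\
  forall B, fr B <= 1 -> nrm (f A0 - f B) <= K * fr B.

Lemma lip_ext f g : (forall B, f B = g B) -> lip f -> lip g.
Proof. by move=> e [K [K0 H]]; exists K; split=> // B; rewrite -!e; exact: H. Qed.

Lemma lip_cst c : lip (fun _ => c).
Proof. by exists 0; split=> // B _; rewrite subrr nrm0 mul0r. Qed.

Lemma lip_entry i j : lip (fun B => B i j).
Proof.
exists 1; split=> // B _; rewrite mul1r.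
by have := frob_entry (A0 - B) i j; rewrite !mxE.
Qed.

Lemma lip_add f g : lip f -> lip g -> lip (fun B => f B + g B).
Proof.
move=> [K1 [K10 H1]] [K2 [K20 H2]]; exists (K1 + K2); split; first exact: addr_ge0.
move=> B hB; rewrite opprD addrACA mulrDl.
exact: le_trans (nrmD _ _) (lerD (H1 _ hB) (H2 _ hB)).
Qed.

Lemma lip_opp f : lip f -> lip (fun B => - f B).
Proof. by move=> [K [K0 H]]; exists K; split=> // B hB; rewrite -opprD nrmN; exact: H. Qed.

Lemma lip_mul f g : lip f -> lip g -> lip (fun B => f B * g B).
Proof.
move=> [K1 [K10 H1]] [K2 [K20 H2]].
exists (nrm (f A0) * K2 + K1 * (nrm (g A0) + K2)); split.
  by apply: addr_ge0; apply: mulr_ge0 => //; [exact: nrm_ge0|apply: addr_ge0 => //; exact: nrm_ge0].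
move=> B hB.
have -> : f A0 * g A0 - f B * g B = f A0 * (g A0 - g B) + (f A0 - f B) * g B.
  by rewrite mulrBr mulrBl addrA subrK.
apply: le_trans (nrmD _ _) _; rewrite !nrmM.
have e1 := H1 _ hB; have e2 := H2 _ hB.
have fr0 := frob_ge0 (A0 - B).
have gB : nrm (g B) <= nrm (g A0) + K2.
  have -> : g B = g A0 + - (g A0 - g B) by rewrite opprB addrC subrK.
  apply: le_trans (nrmD _ _) _; rewrite lerD2l nrmN.
  apply: le_trans e2 _; rewrite -[leRHS]mulr1; exact: ler_wpM2l.
have a0 := nrm_ge0 (f A0); have b0 := nrm_ge0 (f A0 - f B).
have c0 := nrm_ge0 (g A0 - g B); have d0 := nrm_ge0 (g B).
rewrite mulrDl; apply: lerD.
  by rewrite -mulrA; apply: ler_wpM2l.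
rewrite [X in _ <= X]mulrAC; apply: le_trans (ler_wpM2l b0 gB) _.
by apply: ler_wpM2r => //; apply: addr_ge0 => //; exact: nrm_ge0.
Qed.

Lemma lip_natmul f n : lip f -> lip (fun B => f B *+ n).
Proof. by move=> H; apply: (lip_ext _ (lip_mul H (lip_cst n%:R))) => B; rewrite mulr_natr. Qed.

Lemma lip_sum (I : Type) (r : seq I) (P : pred I) (F : I -> M -> C) :
  (forall i, lip (F i)) -> lip (fun B => \sum_(i <- r | P i) F i B).
Proof.
move=> H; elim: r => [|x r IH].
  by apply: (lip_ext _ (lip_cst 0)) => B; rewrite big_nil.
have [Px|nPx] := boolP (P x).
  by apply: (lip_ext _ (lip_add (H x) IH)) => B; rewrite big_cons Px.
by apply: (lip_ext _ IH) => B; rewrite big_cons (negbTE nPx).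
Qed.

Lemma lip_prod (I : Type) (r : seq I) (P : pred I) (F : I -> M -> C) :
  (forall i, lip (F i)) -> lip (fun B => \prod_(i <- r | P i) F i B).
Proof.
move=> H; elim: r => [|x r IH].
  by apply: (lip_ext _ (lip_cst 1)) => B; rewrite big_nil.
have [Px|nPx] := boolP (P x).
  by apply: (lip_ext _ (lip_mul (H x) IH)) => B; rewrite big_cons Px.
by apply: (lip_ext _ IH) => B; rewrite big_cons (negbTE nPx).
Qed.

Lemma lip_det k' (S : M -> 'M[C]_k') :
  (forall i j, lip (fun B => S B i j)) -> lip (fun B => \det (S B)).
Proof.
move=> H; apply: (lip_ext _ (lip_sum (index_enum _) xpredT (F := fun (s : 'S_(k')) B => (-1) ^+ s * \prod_i S B i (s i)) _)).
  by move=> B; rewrite /determinant.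
move=> s; apply: lip_mul; first exact: lip_cst.
by apply: lip_prod => i; exact: H.
Qed.

Definition lipP (F : M -> {poly C}) := forall i, lip (fun B => (F B)`_i).

Lemma lipP_ext F G : (forall B, F B = G B) -> lipP F -> lipP G.
Proof. by move=> e H i; apply: (lip_ext _ (H i)) => B; rewrite e. Qed.

Lemma lipP_cst p : lipP (fun _ => p).
Proof. by move=> i; exact: lip_cst. Qed.

Lemma lipP_C f : lip f -> lipP (fun B => (f B)%:P).
Proof.
move=> H [|i].
  by apply: (lip_ext _ H) => B; rewrite coefC.
by apply: (lip_ext _ (lip_cst 0)) => B; rewrite coefC.
Qed.

Lemma lipP_add F G : lipP F -> lipP G -> lipP (fun B => F B + G B).
Proof. by move=> H1 H2 i; apply: (lip_ext _ (lip_add (H1 i) (H2 i))) => B; rewrite coefD. Qed.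

Lemma lipP_opp F : lipP F -> lipP (fun B => - F B).
Proof. by move=> H1 i; apply: (lip_ext _ (lip_opp (H1 i))) => B; rewrite coefN. Qed.

Lemma lipP_mul F G : lipP F -> lipP G -> lipP (fun B => F B * G B).
Proof.
move=> H1 H2 i.
apply: (lip_ext _ (lip_sum (index_enum 'I_i.+1) xpredT
   (F := fun (j : 'I_i.+1) B => (F B)`_j * (G B)`_(i - j)) _)).
  by move=> B; rewrite coefM.
by move=> j; apply: lip_mul.
Qed.

Lemma lipP_sum (I : Type) (r : seq I) (P : pred I) (F : I -> M -> {poly C}) :
  (forall i, lipP (F i)) -> lipP (fun B => \sum_(i <- r | P i) F i B).
Proof.
move=> H; elim: r => [|x r IH].
  by apply: (lipP_ext _ (lipP_cst 0)) => B; rewrite big_nil.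
have [Px|nPx] := boolP (P x).
  by apply: (lipP_ext _ (lipP_add (H x) IH)) => B; rewrite big_cons Px.
by apply: (lipP_ext _ IH) => B; rewrite big_cons (negbTE nPx).
Qed.

Lemma lipP_prod (I : Type) (r : seq I) (P : pred I) (F : I -> M -> {poly C}) :
  (forall i, lipP (F i)) -> lipP (fun B => \prod_(i <- r | P i) F i B).
Proof.
move=> H; elim: r => [|x r IH].
  by apply: (lipP_ext _ (lipP_cst 1)) => B; rewrite big_nil.
have [Px|nPx] := boolP (P x).
  by apply: (lipP_ext _ (lipP_mul (H x) IH)) => B; rewrite big_cons Px.
by apply: (lipP_ext _ IH) => B; rewrite big_cons (negbTE nPx).
Qed.

Lemma lipP_det k' (S : M -> 'M[{poly C}]_k') :
  (forall i j, lipP (fun B => S B i j)) -> lipP (fun B => \det (S B)).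
Proof.
move=> H; apply: (lipP_ext _ (lipP_sum (index_enum _) xpredT (F := fun (s : 'S_(k')) B => (-1) ^+ s * \prod_i S B i (s i)) _)).
  by move=> B; rewrite /determinant.
move=> s; apply: lipP_mul; first exact: lipP_cst.
by apply: lipP_prod => i; exact: H.
Qed.

Lemma lipP_deriv F : lipP F -> lipP (fun B => (F B)^`()).
Proof. by move=> H i; apply: (lip_ext _ (lip_natmul i.+1 (H i.+1))) => B; rewrite coef_deriv. Qed.

Lemma lipP_char_poly : lipP (fun B => char_poly B).
Proof.
apply: lipP_det => i j.
apply: (lipP_ext _ (lipP_add (lipP_cst ('X *+ (i == j))) (lipP_C (lip_opp (lip_entry i j))))).
by move=> B; rewrite !mxE polyCN.
Qed.
End Lip.
Section Alg.
Variables (R : realType) (m : nat).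
Local Notation C := R[i].
Local Notation M := 'M[C]_m.+1.

Definition Fg (B : M) : C := \det B * resultant (char_poly B) (char_poly B)^`().

Lemma Fg_good (B : M) : Fg B != 0 <-> (B \in unitmx /\ distinct_eigs B).
Proof.
have cp0 : char_poly B != 0 by rewrite -size_poly_gt0 size_char_poly.
have [rs Hrs] := closed_field_poly_normal (char_poly B).
move: Hrs; rewrite (monicP (char_poly_monic B)) scale1r => Hrs.
have sz : size rs = m.+1.
  by have := size_char_poly B; rewrite Hrs size_prod_XsubC => -[].
have resE : (resultant (char_poly B) (char_poly B)^`() != 0) = uniq rs.
  rewrite resultant_eq0 -separable_prod_XsubC -Hrs unlock coprimep_def.
  have : gcdp (char_poly B) (char_poly B)^`() != 0 by rewrite gcdp_eq0 negb_and cp0.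
  rewrite -size_poly_gt0; case: (size _) => [|[|k]] //.
have rootE a : eigenvalue B a = (a \in rs) by rewrite eigenvalue_root_char Hrs root_prod_XsubC.
rewrite /Fg mulf_eq0 negb_or unitmxE unitfE resE; split.
  case/andP=> -> u; split => //; exists rs; split => //.
  by apply/allP => a; rewrite rootE.
case=> -> [s [us ss /allP als]] /=.
apply: (leq_size_uniq us) => [a /als|]; first by rewrite rootE.
by rewrite sz ss.
Qed.
End Alg.

Lemma deriv_monic (R' : idomainType) (p : {poly R'}) k :
  p \is monic -> size p = k.+2 -> k.+1%:R != 0 :> R' ->
  size p^`() = k.+1 /\ lead_coef p^`() = k.+1%:R.
Proof.
move=> mp sp hk.
have ck : p^`()`_k = k.+1%:R.
  rewrite coef_deriv; have -> : p`_k.+1 = lead_coef p by rewrite lead_coefE sp.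
  by rewrite (monicP mp).
have p0 : p != 0 by rewrite -size_poly_gt0 sp.
have s1 : (size p^`() <= k.+1)%N by rewrite -ltnS -sp lt_size_deriv.
have s2 : ~~ (size p^`() <= k)%N.
  by apply: contra hk => /(nth_default 0) h; rewrite -ck; apply/eqP; exact: h.
have sz : size p^`() = k.+1 by apply/eqP; rewrite eqn_leq s1 ltnNge.
by split => //; rewrite lead_coefE sz.
Qed.

Section Main.
Variables (R : realType) (m : nat).
Local Notation C := R[i].
Local Notation M := 'M[C]_m.+1.

Definition SylN (a b : nat) (p q : {poly C}) : 'M[C]_(a + b) :=
  \matrix_(i < a + b, j < a + b)
    match split i with inl l => p`_(j - l) *+ (l <= j)%N | inr l => q`_(j - l) *+ (l <= j)%N end.

Lemma resultantE (p q : {poly C}) a b :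
  (size q).-1 = a -> (size p).-1 = b -> resultant p q = \det (SylN a b p q).
Proof.
move=> Ha Hb; subst a b; rewrite /resultant; congr (\det _).
by apply/matrixP => i j; rewrite Sylvester_mxE mxE.
Qed.

Lemma nat_neq0 k : k.+1%:R != 0 :> C.
Proof. by rewrite pnatr_eq0. Qed.

Lemma lip_Fg (A0 : M) : lip A0 (@Fg R m).
Proof.
have E (B : M) : Fg B = \det B * \det (SylN m m.+1 (char_poly B) (char_poly B)^`()).
  rewrite /Fg (resultantE (a := m) (b := m.+1)) //.
    by have [-> _] := deriv_monic (char_poly_monic B) (size_char_poly B) (nat_neq0 m).
  by rewrite size_char_poly.
apply: (lip_ext (fun B => esym (E B))); apply: lip_mul.
  by apply: lip_det => i j; exact: lip_entry.
apply: lip_det => i j; case Es: (split i) => [l|l].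
  apply: (lip_ext _ (lip_natmul (l <= j)%N (lipP_char_poly A0 (j - l)%N))) => B.
  by rewrite mxE Es.
apply: (lip_ext _ (lip_natmul (l <= j)%N (lipP_deriv (lipP_char_poly A0) (j - l)%N))) => B.
by rewrite mxE Es.
Qed.


Lemma stable (A0 : M) : Fg A0 != 0 ->
  exists d : R, 0 < d /\ forall B, frob_norm (A0 - B) < d -> Fg B != 0.
Proof.
move=> F0; have [K [K0 H]] := lip_Fg A0.
set a := nrm (Fg A0).
have a0 : 0 < a by rewrite lt0r nrm_eq0 F0 nrm_ge0.
have K1 : 0 < K + 1 by rewrite ltr_wpDl.
exists (Num.min 1 (a / (K + 1))); split.
  by rewrite lt_min ltr01 divr_gt0.
move=> B; rewrite lt_min => /andP[h1 h2].
have := H B (ltW h1).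
have fr0 := frob_ge0 (A0 - B).
have : K * frob_norm (A0 - B) < a.
  apply: (le_lt_trans (y := (K + 1) * frob_norm (A0 - B))).
    by apply: ler_wpM2r => //; rewrite lerDl.
  by rewrite mulrC -ltr_pdivlMr.
move=> lt le; apply/negP => /eqP FB; move: le; rewrite FB subr0 -/a.
by move=> le; move: (le_lt_trans le lt); rewrite ltxx.
Qed.

Lemma line_poly (A B : M) : exists Q : {poly C},
  forall t : C, Q.[t] = Fg (t *: B + (1 - t) *: A).
Proof.
pose Z : 'M[{poly C}]_m.+1 := \matrix_(i, j) ('X * (B i j)%:P + (1 - 'X) * (A i j)%:P).
exists (\det Z * resultant (char_poly Z) (char_poly Z)^`()) => t.
have hd := deriv_monic (char_poly_monic Z) (size_char_poly Z).
have [_ lc] : size (char_poly Z)^`() = m.+1 /\ lead_coef (char_poly Z)^`() = m.+1%:R.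
  by apply: hd; rewrite -polyC_natr polyC_eq0 nat_neq0.
have ZE : map_mx (horner_eval t) Z = t *: B + (1 - t) *: A.
  by apply/matrixP => i j; rewrite !mxE horner_evalE !hornerE.
rewrite -horner_evalE rmorphM /= -det_map_mx ZE /Fg; congr (_ * _).
rewrite map_resultant; last 2 first.
- by rewrite (monicP (char_poly_monic Z)) rmorph1 oner_neq0.
- by rewrite lc rmorph_nat nat_neq0.
by rewrite -deriv_map map_char_poly ZE.
Qed.
End Main.

Unset Implicit Arguments.
Theorem theorem3p6 (R : realType) (n : nat) (Om : 'M[R[i]]_n -> Prop) :
  convex_mx Om ->
  (exists A : 'M[R[i]]_n, closure_mx Om A /\ A \in unitmx /\ distinct_eigs A) ->
  dense_in (Omega_s Om) Om.
Proof.
case: n Om => [|m] Om conv [A0 [clA0 [uA0 dA0]]] A OmA e e0.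
  exists A; split; last by rewrite /frob_norm big_ord0 sqrtr0.
  split; [exact: OmA| |by exists [::]].
  rewrite unitmxE det_mx00. exact: unitr1.
have F0 : Fg A0 != 0 by apply/Fg_good.
have [d [d0 Hd]] := stable F0.
have [B [OmB hB]] := clA0 d d0.
have FB := Hd B hB.
have [Q HQ] := line_poly A B.
have Q0 : Q != 0.
  apply: contra FB => /eqP Q0; have := HQ 1; rewrite Q0 horner0 subrr scale0r addr0 scale1r.
  by move=> <-.
set fr := frob_norm (A - B).
have fr0 : 0 <= fr := frob_ge0 _.
have fr1 : 0 < fr + 1 by rewrite ltr_wpDl.
set dl := Num.min 1 (e / (fr + 1)).
have dl0 : 0 < dl by rewrite lt_min ltr01 divr_gt0.
pose tt (i : nat) : R := dl / (i.+2)%:R.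
pose s := [seq (tt i)%:C | i <- iota 0 (size Q)].
have us : uniq s.
  rewrite map_inj_uniq ?iota_uniq // => i j /complexI.
  rewrite /tt => /(mulfI (lt0r_neq0 dl0)) /invr_inj /eqP.
  by rewrite eqr_nat => /eqP [].
have : ~~ all (root Q) s.
  apply/negP => als; have := max_poly_roots Q0 als us.
  by rewrite size_map size_iota ltnn.
case/allPn => x /mapP [i _ ->] nr.
have t0 : 0 <= tt i by rewrite divr_ge0 ?ltW.
have t1 : tt i <= dl.
  rewrite /tt ler_pdivrMr ?ltr0n //.
  by apply: ler_peMr; [exact: ltW | rewrite ler1n].
have tl1 : tt i <= 1 by apply: le_trans t1 _; rewrite ge_min lexx.
have OmZ := conv B A OmB OmA (tt i) (introT andP (conj t0 tl1)).
exists ((tt i)%:C *: B + (1 - tt i)%:C *: A); split.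
  have : Fg ((tt i)%:C *: B + (1 - tt i)%:C *: A) != 0.
    by rewrite rmorphB rmorph1 -HQ.
  by move/Fg_good => [u de]; split.
have -> : A - ((tt i)%:C *: B + (1 - tt i)%:C *: A) = (tt i)%:C *: (A - B).
  rewrite rmorphB rmorph1 scalerBl scale1r scalerBr.
  move: ((tt i)%:C *: A) ((tt i)%:C *: B) => u v.
  by rewrite opprD opprB addrCA [A + (u - A)]addrC subrK addrC.
rewrite frob_scale // -/fr.
have h2 : dl <= e / (fr + 1) by rewrite ge_min lexx orbT.
apply: (le_lt_trans (y := e / (fr + 1) * fr)).
  by apply: ler_wpM2r => //; apply: le_trans t1 h2.
by rewrite mulrAC ltr_pdivrMr // ltr_pM2l // ltrDl ltr01.
Qed.
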